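(* Let $f:\{0,1\}^n\to\{0,1\}^m$ be a Boolean function which is either constant or balanced. For each $i=0,\dots,m-1$ run the algorithm $\mathrm{GPK}(\mathbf{e}_i)$ and let $\delta_i\in\{0,1\}^n$ be its output. If $f$ is constant, then with certainty $\delta_i=\mathbf{0}$ for all $i$; if $f$ is balanced, then with certainty $\delta_i\neq\mathbf{0}$ for at least one $i$. Consequently, deciding ''constant'' if all $\delta_i=\mathbf{0}$ and ''balanced'' otherwise is always correct.
   Context: A function $f:\{0,1\}^n\to\{0,1\}^m$ is constant if $f(\mathbf{x})$ is the same for all $\mathbf{x}$, and balanced if it takes exactly two distinct values, each on exactly half of the inputs. Bits are indexed from the right starting at $0$ and $\mathbf{e}_i=0^{m-1-i}\,1\,0^{i}\in\{0,1\}^m$. For strings $\mathbf{y},\mathbf{z}$ of equal length, $\mathbf{y}\oplus\mathbf{z}$ is bitwise XOR and $\mathbf{y}\cdot\mathbf{z}=\bigoplus_j y_jz_j$. $\mathbf{U}_f$ is the unitary with $\mathbf{U}_f(\ket{\mathbf{x}}_n\otimes\ket{\mathbf{z}}_m)=\ket{\mathbf{x}}_n\otimes\ket{\mathbf{z}\oplus f(\mathbf{x})}_m$; $\mathbf{H}_k=\mathbf{H}^{\otimes k}$ with $\mathbf{H}$ the one-qubit Hadamard gate. The algorithm $\mathrm{GPK}(\mathbf{y})$ for $\mathbf{y}\in\{0,1\}^m$: start in $\ket{\mathbf{0}}_n\otimes\ket{\mathbf{0}}_m$; apply Pauli $\mathbf{X}$ gates to get $\ket{\mathbf{0}}_n\otimes\ket{\mathbf{y}}_m$;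 apply $\mathbf{H}_{n+m}$; apply $\mathbf{U}_f$; apply $\mathbf{H}_n$ to the first register; measure the first register in the computational basis, giving the output in $\{0,1\}^n$. *)

(* Defs.v *)
From HB Require Import structures.
From mathcomp Require Import all_boot all_order all_algebra all_field.
Unset Printing Implicit Defensive.
Import Order.TTheory GRing.Theory Num.Theory.
Local Open Scope ring_scope.

(* Bit strings of length k: bit j (j : 'I_k) is the bit with index j
   (indexing from the right starting at 0). *)
Definition bits (k : nat) := {ffun 'I_k -> bool}.

Definition bzero (k : nat) : bits k := [ffun _ => false].
Definition bxor (k : nat) (y z : bits k) : bits k := [ffun j => xorb (y j) (z j)].
Definition bdot (k : nat) (y z : bits k) : bool := \big[addb/false]_(j < k) (y j && z j).
Definition unitbits (m : nat) (i : 'I_m) : bits m := [ffun j => j == i].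

Definition is_constant (n m : nat) (f : bits n -> bits m) : Prop :=
  exists c : bits m, forall x, f x = c.

Definition is_balanced (n m : nat) (f : bits n -> bits m) : Prop :=
  exists a b : bits m, [/\ a != b, (forall x, f x = a \/ f x = b),
    (#|[pred x | f x == a]|).*2 = (2 ^ n)%N & (#|[pred x | f x == b]|).*2 = (2 ^ n)%N].

(* States of the n+m qubit system: amplitude of each basis vector |x>_n (x) |z>_m. *)
Definition state (n m : nat) := bits n * bits m -> algC.

Definition Hent (b c : bool) : algC := (-1) ^+ (b && c) / sqrtC 2.
(* Matrix entry <w|H^{(x)k}|x> of the k-fold tensor power *)
Definition Hk (k : nat) (w x : bits k) : algC := \prod_(j < k) Hent (w j) (x j).

Definition ket0 (n m : nat) : state n m :=
  fun p => if p == (bzero n, bzero m) then 1 else 0.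
(* Pauli X on every second-register qubit j with y_j = 1: |x>|z> |-> |x>|z xor y> *)
Definition applyX (n m : nat) (y : bits m) (psi : state n m) : state n m :=
  fun p => psi (p.1, bxor m p.2 y).
Definition applyHall (n m : nat) (psi : state n m) : state n m :=
  fun p => \sum_(x : bits n) \sum_(z : bits m) Hk n p.1 x * Hk m p.2 z * psi (x, z).
(* U_f : |x>|z> |-> |x>|z xor f x>  (amplitude form, U_f being an involution) *)
Definition applyUf (n m : nat) (f : bits n -> bits m) (psi : state n m) : state n m :=
  fun p => psi (p.1, bxor m p.2 (f p.1)).
Definition applyH1 (n m : nat) (psi : state n m) : state n m :=
  fun p => \sum_(x : bits n) Hk n p.1 x * psi (x, p.2).

Definition GPK_final (n m : nat) (f : bits n -> bits m) (y : bits m) : state n m :=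
  applyH1 n m (applyUf n m f (applyHall n m (applyX n m y (ket0 n m)))).

(* Probability that measuring the first register in the computational basis yields w *)
Definition GPK_prob (n m : nat) (f : bits n -> bits m) (y : bits m) (w : bits n) : algC :=
  \sum_(z : bits m) `|GPK_final n m f y (w, z)| ^+ 2.

(* Main.v *)
Require Import Defs.
From mathcomp Require Import all_boot all_order all_algebra all_field.
From mathcomp Require Import ring zify.
Import Order.TTheory GRing.Theory Num.Theory.
Local Open Scope ring_scope.

Definition s : algC := (sqrtC 2)^-1.

Lemma HentE b c : Hent b c = (-1) ^+ (b && c) * s.
Proof. by []. Qed.

Lemma Hk0l k x : Hk k (bzero k) x = s ^+ k.
Proof.
rewrite /Hk; under eq_bigr => j _ do rewrite HentE ffunE /= expr0 mul1r.
by rewrite prodr_const card_ord.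
Qed.

Lemma Hk0r k x : Hk k x (bzero k) = s ^+ k.
Proof.
rewrite /Hk; under eq_bigr => j _ do rewrite HentE ffunE andbF expr0 mul1r.
by rewrite prodr_const card_ord.
Qed.

Lemma Hk_unit m z i : Hk m z (unitbits m i) = (-1) ^+ (z i) * s ^+ m.
Proof.
rewrite /Hk; under eq_bigr => j _ do rewrite HentE.
rewrite big_split /= prodr_const card_ord; congr (_ * _).
rewrite (bigD1 i) //= big1 ?mulr1; first by rewrite ffunE eqxx andbT.
by move=> j /negbTE ji; rewrite ffunE ji andbF.
Qed.

Lemma Hall_eval n m y p :
  applyHall n m (applyX n m y (ket0 n m)) p = Hk n p.1 (bzero n) * Hk m p.2 y.
Proof.
rewrite /applyHall (bigD1 (bzero n)) //=.
rewrite [X in _ + X]big1 ?addr0; last first.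
  move=> x xn; apply: big1 => z _.
  by rewrite /applyX /ket0 /= xpair_eqE (negbTE xn) /= mulr0.
rewrite (bigD1 y) //=.
rewrite [X in _ + X]big1 ?addr0.
  rewrite /applyX /ket0 /=.
  have -> : bxor m y y = bzero m by apply/ffunP => j; rewrite !ffunE; case: (y j).
  by rewrite eqxx mulr1.
move=> z zy; rewrite /applyX /ket0 /= xpair_eqE eqxx /=.
case: eqP; last by rewrite mulr0.
move=> /ffunP H; case/negP: zy; apply/eqP/ffunP => j.
by move: (H j); rewrite !ffunE; case: (z j); case: (y j).
Qed.

Lemma final_eq n m f i z :
  GPK_final n m f (unitbits m i) (bzero n, z) =
  s ^+ (n + (n + m)) * \sum_x (-1) ^+ (xorb (z i) (f x i)).
Proof.
rewrite /GPK_final /applyH1 /applyUf mulr_sumr; apply: eq_bigr => x _.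
rewrite Hall_eval /= Hk0l Hk0r Hk_unit ffunE !exprD; ring.
Qed.

Lemma s_ge0 : 0 <= s.
Proof. by rewrite /s invr_ge0 sqrtC_ge0 ler0n. Qed.

Lemma s2 : s ^+ 2 = 2^-1.
Proof. by rewrite /s exprVn sqrtCK. Qed.

Lemma card_bits k : #|bits k| = (2 ^ k)%N.
Proof. by rewrite card_ffun card_bool card_ord. Qed.

Lemma sum_const_full (T : finType) (c : algC) : \sum_(x : T) c = c *+ #|T|.
Proof. by rewrite -sumr_const; apply: eq_bigl => x; rewrite inE. Qed.

Lemma const_case n m f i c : (forall x, f x = c) ->
  GPK_prob n m f (unitbits m i) (bzero n) = 1.
Proof.
move=> fc; rewrite /GPK_prob.
under eq_bigr => z _.
  rewrite final_eq.
  under eq_bigr => x _ do rewrite fc.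
  rewrite sum_const_full card_bits normrM normrX (ger0_norm s_ge0) normrMn normr_sign.
  over.
have E : forall x : algC, x *+ (2 ^ m) = x * 2 ^+ m by move=> x; rewrite -natrX mulr_natr.
rewrite sum_const_full card_bits exprMn -exprM mulnC exprM s2 E natrX.
rewrite exprVn -exprM -mulrA -exprD.
have -> : (n * 2 + m = n + (n + m))%N by lia.
by rewrite mulVf // expf_neq0 // pnatr_eq0.
Qed.

Lemma sum_const_pred (T : finType) (P : pred T) (c : algC) :
  \sum_(x | P x) c = c *+ #|[pred x | P x]|.
Proof. by rewrite -sumr_const; apply: eq_bigl => x; rewrite inE. Qed.

Lemma bal_case n m f : is_balanced n m f ->
  exists i, GPK_prob n m f (unitbits m i) (bzero n) = 0.
Proof.
case=> a [b [ab fab ca cb]].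
have [i hi] : exists i, a i != b i.
  case: (pickP (fun j => a j != b j)) => [j hj|H]; first by exists j.
  case/negP: ab; apply/eqP/ffunP => j; by move: (H j) => /negbFE/eqP.
have Nab : #|[pred x | f x == a]| = #|[pred x | f x == b]|.
  by apply: double_inj; rewrite ca cb.
exists i; rewrite /GPK_prob big1 // => z _; rewrite final_eq.
rewrite (bigID (fun x => f x == a)) /=.
rewrite [X in _ + X](eq_bigl (fun x => f x == b)); last first.
  move=> x; case: (fab x) => ->; rewrite eqxx.
    by rewrite (negbTE ab).
  by rewrite eq_sym (negbTE ab).
rewrite (eq_bigr (fun _ => (-1) ^+ (xorb (z i) (a i)))); last by move=> x /eqP ->.
rewrite [X in _ + X](eq_bigr (fun _ => (-1) ^+ (xorb (z i) (b i)))); last by move=> x /eqP ->.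
rewrite !sum_const_pred Nab -mulrnDl.
have -> : (-1) ^+ (xorb (z i) (a i)) + (-1) ^+ (xorb (z i) (b i)) = 0 :> algC.
  by move: hi; case: (z i); case: (a i); case: (b i) => //= _; rewrite ?expr1 ?expr0 ?addrN ?addNr.
by rewrite mul0rn mulr0 normr0 expr0n.
Qed.

Theorem theorem3p4 (n m : nat) (f : bits n -> bits m) :
  (is_constant n m f \/ is_balanced n m f) ->
  (is_constant n m f -> forall i : 'I_m, GPK_prob n m f (unitbits m i) (bzero n) = 1) /\
  (is_balanced n m f -> exists i : 'I_m, GPK_prob n m f (unitbits m i) (bzero n) = 0).
Proof.
move=> _; split; last exact: bal_case.
by case=> c fc i; apply: const_case fc.
Qed.
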